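(* Let $n\geqslant 3$, let $D=\{x,y,e_2,\ldots,e_{n-1}\}$ and let $V$ be the set of monoid relations on $D$: (V1) $e_i^2=e_i$ for $2\leqslant i\leqslant n-1$; (V2) $xyx=x$ and $yxy=y$; (V3) $yx^2y=xy^2x$; (V4) $e_ie_j=e_je_i$ for $2\leqslant i<j\leqslant n-1$; (V5) $xye_i=e_ixy$ and $yxe_i=e_iyx$ for $2\leqslant i\leqslant n-1$; (V6) $xe_{i+1}=e_ix$ for $2\leqslant i\leqslant n-2$; (V7) $x^2y=e_{n-1}x$ and $yx^2=xe_2$; (V8) $yxe_2\cdots e_{n-1}xy=xe_2\cdots e_{n-1}xy$. Then $\langle D\mid V\rangle$ is a monoid presentation of $\mathcal{OCI}_n$ (with respect to the map sending each letter to the transformation of the same name). It has $n$ generators and $\frac12(n^2+3n)$ relations.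
   Context: Let $\Omega_n=\{1<\cdots<n\}$, $\mathcal{I}_n$ the symmetric inverse monoid on $\Omega_n$ (maps on the right, composed left to right). $g$ is the permutation $ig=i+1$ ($1\leqslant i\leqslant n-1$), $ng=1$; $\mathcal{C}_n=\{1,g,\ldots,g^{n-1}\}$; $\mathcal{CI}_n=\{\alpha\in\mathcal{I}_n\mid \alpha=\sigma|_{\mathrm{Dom}(\alpha)}\text{ for some }\sigma\in\mathcal{C}_n\}$; $\mathcal{OCI}_n$ is the submonoid of order-preserving elements of $\mathcal{CI}_n$. $e_i$ is the partial identity on $\Omega_n\setminus\{i\}$; $x$ has domain $\{1,\ldots,n-1\}$ with $ix=i+1$; $y=x^{-1}$ has domain $\{2,\ldots,n\}$ with $iy=i-1$. A presentation $\langle D\mid V\rangle$ defines $M$ via an injective map $D\to M$ whose image generates $M$ if the kernel of the induced homomorphism $D^*\to M$ is the smallest congruence on $D^*$ containing $V$. *)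

(* Defs.v *)
From HB Require Import structures.
From mathcomp Require Import all_boot.
Set Implicit Arguments. Unset Strict Implicit. Unset Printing Implicit Defensive.

(* Omega_n = {1 < ... < n} is represented by 'I_n, the ordinal k standing for
   the point k+1.  A partial transformation of Omega_n is a finite function
   'I_n -> option 'I_n (None = undefined). *)
Definition ptrans (n : nat) := {ffun 'I_n -> option 'I_n}.

Definition in_dom n (a : ptrans n) (i : 'I_n) := a i != None.

Definition is_pinj n (a : ptrans n) :=
  forall i j : 'I_n, in_dom a i -> a i = a j -> i = j.

(* maps on the right, composed left to right: i (a b) = (i a) b *)
Definition pcomp n (a b : ptrans n) : ptrans n := [ffun i => obind b (a i)].
Definition pid n : ptrans n := [ffun i => Some i].

(* the permutation g^k : i |-> i + k (mod n) (same formula 0- or 1-based) *)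
Definition gpow n (k : nat) (i : 'I_n) : nat := (val i + k) %% n.

Definition in_CI n (a : ptrans n) :=
  exists2 k, k < n &
    forall i : 'I_n, in_dom a i -> omap val (a i) = Some (gpow k i).

Definition order_preserving n (a : ptrans n) :=
  forall (i j : 'I_n) (ai aj : 'I_n),
    val i < val j -> a i = Some ai -> a j = Some aj -> val ai < val aj.

Definition in_OCI n (a : ptrans n) := in_CI a /\ order_preserving a.

(* the generators; e_ i is indexed as in the paper (1-based label i),
   i.e. the partial identity on Omega_n \ {i}. *)
Definition e_ n (i : nat) : ptrans n :=
  [ffun k : 'I_n => if (val k).+1 == i then None else Some k].
Definition x_ n : ptrans n := [ffun k : 'I_n => insub (val k).+1].
Definition y_ n : ptrans n :=
  [ffun k : 'I_n => if val k == 0 then None else insub (val k).-1].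

Inductive letter := LX | LY | LE of nat.

Definition letter_eqb (a b : letter) : bool :=
  match a, b with
  | LX, LX => true | LY, LY => true | LE i, LE j => i == j | _, _ => false end.
Lemma letter_eqP : Equality.axiom letter_eqb.
Proof.
by case=> [||i] [||j] /=; try constructor => //; apply: (iffP eqP) => [->|[]].
Qed.
HB.instance Definition _ := hasDecEq.Build letter letter_eqP.

Definition es (n : nat) : seq letter := [seq LE i | i <- iota 2 (n - 2)].
Definition D (n : nat) : seq letter := [:: LX; LY] ++ es n.

Definition eval_letter n (l : letter) : ptrans n :=
  match l with LX => x_ n | LY => y_ n | LE i => e_ n i end.

Definition eval_word n (w : seq letter) : ptrans n :=
  foldl (fun acc l => pcomp acc (eval_letter n l)) (pid n) w.

Definition V (n : nat) : seq (seq letter * seq letter) :=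
  [seq ([:: LE i; LE i], [:: LE i]) | i <- iota 2 (n - 2)] ++
  [:: ([:: LX; LY; LX], [:: LX]); ([:: LY; LX; LY], [:: LY])] ++
  [:: ([:: LY; LX; LX; LY], [:: LX; LY; LY; LX])] ++
  [seq ([:: LE i; LE j], [:: LE j; LE i])
              | i <- iota 2 (n - 2), j <- iota i.+1 (n.-1 - i)] ++
  flatten [seq [:: ([:: LX; LY; LE i], [:: LE i; LX; LY]);
                           ([:: LY; LX; LE i], [:: LE i; LY; LX])]
                    | i <- iota 2 (n - 2)] ++
  [seq ([:: LX; LE i.+1], [:: LE i; LX]) | i <- iota 2 (n - 3)] ++
  [:: ([:: LX; LX; LY], [:: LE n.-1; LX]); ([:: LY; LX; LX], [:: LX; LE 2])] ++
  [:: ([:: LY; LX] ++ es n ++ [:: LX; LY], [:: LX] ++ es n ++ [:: LX; LY])].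

Inductive congr (R : seq (seq letter * seq letter)) : seq letter -> seq letter -> Prop :=
| congr_refl w : congr R w w
| congr_sym u v : congr R u v -> congr R v u
| congr_trans u v w : congr R u v -> congr R v w -> congr R u w
| congr_rel p q u v : (u, v) \in R -> congr R (p ++ u ++ q) (p ++ v ++ q).

(* Main.v *)
Require Import Defs.
From mathcomp Require Import all_boot zify.
From Stdlib Require Import Setoid Morphisms.
Set Implicit Arguments. Unset Strict Implicit. Unset Printing Implicit Defensive.

Definition step (n : nat) (l : letter) (o : option nat) : option nat :=
  match o with
  | None => None
  | Some i => match l with
              | LX => if i.+1 < n then Some i.+1 else None
              | LY => if i == 0 then None else Some i.-1
              | LE j => if i.+1 == j then None else Some i
              end
  end.

Definition run n (w : seq letter) (o : option nat) :=
  foldl (fun o l => step n l o) o w.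

Lemma run_cat n u v o : run n (u ++ v) o = run n v (run n u o).
Proof. by rewrite /run foldl_cat. Qed.

Lemma run_None n w : run n w None = None.
Proof. by elim: w. Qed.

Lemma step_ok n l i j : i < n -> step n l (Some i) = Some j -> j < n.
Proof.
case: l => [||k] /=; case: ifP => // H Hi [<-]; lia.
Qed.

Lemma run_cons n l w o : run n (l :: w) o = run n w (step n l o).
Proof. by []. Qed.

Lemma run_ok n w i j : i < n -> run n w (Some i) = Some j -> j < n.
Proof.
elim: w i => [|l w IH] i Hi; first by case=> <-.
rewrite run_cons.
case E: (step n l (Some i)) => [k|]; last by rewrite run_None.
apply: IH. exact: step_ok E.
Qed.

Lemma letterE n l (k : 'I_n) :
  omap val (eval_letter n l k) = step n l (Some (val k)).
Proof.
case: l => [||j] /=; rewrite ffunE.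
- by case: insubP => [u Hu /= ->|/negbTE ->]; rewrite ?Hu.
- case: eqP => //= _. have := ltn_ord k. by case: insubP => [u Hu /= ->|/negbTE H] //; lia.
- by case: eqP.
Qed.

Lemma evalE_gen n w (acc : ptrans n) (k : 'I_n) :
  omap val ((foldl (fun (acc : ptrans n) l => Defs.pcomp acc (eval_letter n l)) acc w : ptrans n) k)
  = run n w (omap val (acc k)).
Proof.
elim: w acc => [|l w IH] acc //=.
rewrite IH; congr run. rewrite /Defs.pcomp ffunE.
case: (acc k) => [j|] //=. exact: letterE.
Qed.

Lemma evalE n w (k : 'I_n) : omap val (eval_word n w k) = run n w (Some (val k)).
Proof. by rewrite /eval_word evalE_gen /pid ffunE. Qed.

Lemma omap_val_inj n (a b : option 'I_n) : omap val a = omap val b -> a = b.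
Proof. by case: a b => [a|] [b|] //= [/val_inj ->]. Qed.

Lemma eval_eq n u v :
  (forall i, i < n -> run n u (Some i) = run n v (Some i)) <-> eval_word n u = eval_word n v.
Proof.
split.
- move=> H; apply/ffunP => k; apply: omap_val_inj; rewrite !evalE. exact: H (ltn_ord k).
- move=> H i Hi. have := evalE u (Ordinal Hi). by rewrite H evalE /=.
Qed.

Lemma cg_ctx R p u v q : congr R u v -> congr R (p ++ u ++ q) (p ++ v ++ q).
Proof.
elim=> {u v} [w|u v _ IH|u v w _ IH1 _ IH2|p' q' u v H].
- exact: congr_refl.
- exact: congr_sym.
- exact: congr_trans IH1 IH2.
- have := congr_rel (p ++ p') (q' ++ q) H. by rewrite -!catA.
Qed.

Lemma cg_l R p u v : congr R u v -> congr R (p ++ u) (p ++ v).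
Proof. by move=> /(cg_ctx p [::]); rewrite !cats0. Qed.

Lemma cg_r R u v q : congr R u v -> congr R (u ++ q) (v ++ q).
Proof. by move=> /(cg_ctx [::] q). Qed.

Lemma cg_rel R u v : (u, v) \in R -> congr R u v.
Proof. by move=> /(congr_rel [::] [::]); rewrite /= !cats0. Qed.

Definition Rsem n u v := forall i, i < n -> run n u (Some i) = run n v (Some i).

Lemma run_es n a c i :
  run n [seq LE j | j <- iota a c] (Some i) = if (a <= i.+1 < a + c) then None else Some i.
Proof.
elim: c a => [|c IH] a; first by rewrite /=; case: ifP => //; lia.
rewrite (_ : iota a c.+1 = a :: iota a.+1 c) // map_cons run_cons /=. case: eqP => [->|Hne]; first by rewrite run_None; case: ifP => //; lia.
rewrite IH. case: ifP; case: ifP => //; lia.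
Qed.

Ltac crush := rewrite /run /=; repeat (case: ifP => /= ?);
  first [reflexivity | (congr Some; lia) | (exfalso; lia)].
Ltac ifs := repeat progress (rewrite ?run_es ?run_None /=; try (case: ifP => /= ?));
  first [reflexivity | (congr Some; lia) | (exfalso; lia)].

Lemma V_sound n u v : 3 <= n -> (u, v) \in V n -> Rsem n u v.
Proof.
move=> Hn; rewrite /V !mem_cat => H k Hk.
case/orP: H => [/mapP[i]|H].
  rewrite mem_iota => Hi [-> ->]. crush.
case/orP: H => [|H].
  by rewrite !inE => /orP[] /eqP[-> ->]; crush.
case/orP: H => [|H].
  by rewrite !inE => /eqP[-> ->]; crush.
case/orP: H => [/allpairsPdep[i [j [Hi Hj [-> ->]]]]|H].
  move: Hi Hj; rewrite !mem_iota => Hi Hj; crush.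
case/orP: H => [/flatten_mapP[i]|H].
  rewrite mem_iota => Hi; rewrite !inE => /orP[] /eqP[-> ->]; crush.
case/orP: H => [/mapP[i]|H].
  rewrite mem_iota => Hi [-> ->]. crush.
case/orP: H => [|H].
  by rewrite !inE => /orP[] /eqP[-> ->]; crush.
move: H; rewrite !inE => /eqP[-> ->].
rewrite !run_cons run_cat /= run_cat /es.
case: eqP => [->|H0] /=.
  rewrite (_ : 1 < n) /=; last lia. rewrite run_None run_es; case: ifP => H1 //=; lia.
rewrite (_ : k.-1.+1 < n) /=; last lia.
rewrite (_ : k.-1.+1 = k); last lia.
ifs.
Qed.

Lemma congr_sound n u v : 3 <= n -> congr (V n) u v -> Rsem n u v.
Proof.
move=> Hn; elim=> {u v} [w|u v _ IH|u v w _ IH1 _ IH2|p q u v H] i Hi.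
- by [].
- by rewrite IH.
- by rewrite IH1 ?IH2.
- rewrite !run_cat. case E: (run n p (Some i)) => [j|]; last by rewrite !run_None.
  by rewrite (V_sound Hn H (run_ok Hi E)).
Qed.

Lemma cg_sym n u v : congr (V n) u v -> congr (V n) v u. Proof. exact: congr_sym. Qed.
Lemma cg_trans n u v w : congr (V n) u v -> congr (V n) v w -> congr (V n) u w.
Proof. exact: congr_trans. Qed.
Add Parametric Relation n : (seq letter) (congr (V n))
  reflexivity proved by (@congr_refl (V n))
  symmetry proved by (@cg_sym n)
  transitivity proved by (@cg_trans n) as cg_rel_inst.
Add Parametric Morphism n : (@cat letter) with signature
  congr (V n) ==> congr (V n) ==> congr (V n) as cat_mor.
Proof.
move=> u u' Hu v v' Hv. apply: (cg_trans (v := u' ++ v)).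
- exact: cg_r. - exact: cg_l.
Qed.

Definition ew n k : seq letter :=
  if k == 0 then [:: LY; LX] else if k == n.-1 then [:: LX; LY] else [:: LE k.+1].

Section Rels.
End Rels.

Lemma xyx n : congr (V n) [:: LX; LY; LX] [:: LX].
Proof. apply: cg_rel. by rewrite /V !mem_cat !inE eqxx /= !orbT. Qed.
Lemma yxy n : congr (V n) [:: LY; LX; LY] [:: LY].
Proof. apply: cg_rel. by rewrite /V !mem_cat !inE eqxx /= !orbT. Qed.

Goal forall n a b, congr (V n) (a ++ [:: LX; LY; LX] ++ b) (a ++ [:: LX] ++ b).
move=> n a b. rewrite xyx. reflexivity. Qed.

Ltac vpos k := rewrite /V !mem_cat; do k (apply/orP; right); try (apply/orP; left).
Tactic Notation "vp" int(k) := vpos k.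

Lemma V1m n i : 2 <= i < n -> ([:: LE i; LE i], [:: LE i]) \in V n.
Proof. move=> H; vp 0; apply/mapP; exists i => //; rewrite mem_iota; lia. Qed.
Lemma V3m n : ([:: LY; LX; LX; LY], [:: LX; LY; LY; LX]) \in V n.
Proof. vp 2; by rewrite inE. Qed.
Lemma V4m n i j : 2 <= i -> i < j -> j < n -> ([:: LE i; LE j], [:: LE j; LE i]) \in V n.
Proof.
move=> H1 H2 H3; vp 3; apply/allpairsPdep; exists i, j; rewrite !mem_iota; split=> //; lia.
Qed.
Lemma V5am n i : 2 <= i < n -> ([:: LX; LY; LE i], [:: LE i; LX; LY]) \in V n.
Proof. move=> H; vp 4; apply/flatten_mapP; exists i; rewrite ?inE ?eqxx //; rewrite mem_iota; lia. Qed.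
Lemma V5bm n i : 2 <= i < n -> ([:: LY; LX; LE i], [:: LE i; LY; LX]) \in V n.
Proof. move=> H; vp 4; apply/flatten_mapP; exists i; rewrite ?inE ?eqxx ?orbT //; rewrite mem_iota; lia. Qed.
Lemma V6m n i : 2 <= i -> i.+1 < n -> ([:: LX; LE i.+1], [:: LE i; LX]) \in V n.
Proof. move=> H1 H2; vp 5; apply/mapP; exists i => //; rewrite mem_iota; lia. Qed.
Lemma V7am n : ([:: LX; LX; LY], [:: LE n.-1; LX]) \in V n.
Proof. vp 6; by rewrite inE eqxx. Qed.
Lemma V7bm n : ([:: LY; LX; LX], [:: LX; LE 2]) \in V n.
Proof. vp 6; by rewrite !inE eqxx orbT. Qed.
Lemma V8m n : ([:: LY; LX] ++ es n ++ [:: LX; LY], [:: LX] ++ es n ++ [:: LX; LY]) \in V n.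
Proof. vp 7; by rewrite ?inE ?eqxx. Qed.

Notation "u =c[ n ] v" := (congr (V n) u v) (at level 70).

Lemma ew0 n : ew n 0 = [:: LY; LX]. Proof. by []. Qed.
Lemma ewN n : 1 < n -> ew n n.-1 = [:: LX; LY].
Proof. move=> H; rewrite /ew eqxx; case: eqP => // ?; lia. Qed.
Lemma ewM n k : 0 < k -> k < n.-1 -> ew n k = [:: LE k.+1].
Proof. move=> H1 H2; rewrite /ew; case: eqP => ?; try lia; case: eqP => // ?; lia. Qed.

Lemma ew_idem n k : 2 < n -> k < n -> ew n k ++ ew n k =c[n] ew n k.
Proof.
move=> Hn Hk.
have [->|H0] := eqVneq k 0.
  rewrite ew0 /=. rewrite -[[:: LY; LX; LY; LX]]/([:: LY; LX; LY] ++ [:: LX]) yxy. reflexivity.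
have [->|H1] := eqVneq k n.-1.
  rewrite ewN; last lia. rewrite -[[:: LX; LY] ++ _]/([:: LX; LY; LX] ++ [:: LY]) xyx. reflexivity.
rewrite ewM; try lia. apply: cg_rel. apply: V1m. lia.
Qed.

Lemma ew_comm_lt n k l : 2 < n -> k < l -> l < n -> ew n k ++ ew n l =c[n] ew n l ++ ew n k.
Proof.
move=> Hn Hkl Hl.
have [->|H0] := eqVneq k 0.
  have [->|H1] := eqVneq l n.-1.
    rewrite ewN; last lia. apply: cg_rel. exact: V3m.
  rewrite ew0 ewM /=; try lia. apply: cg_rel. apply: V5bm. lia.
have [->|H1] := eqVneq l n.-1.
  rewrite ewN; last lia. rewrite ewM /=; try lia. apply: cg_sym. apply: cg_rel. apply: V5am. lia.
rewrite !ewM; try lia. apply: cg_rel. apply: V4m; lia.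
Qed.

Lemma ew_comm n k l : 2 < n -> k < n -> l < n -> ew n k ++ ew n l =c[n] ew n l ++ ew n k.
Proof.
move=> Hn Hk Hl. case: (ltngtP k l) => H.
- exact: ew_comm_lt.
- apply: cg_sym. exact: ew_comm_lt.
- rewrite H. reflexivity.
Qed.

Lemma x_ew n k : 2 < n -> k.+1 < n -> [:: LX] ++ ew n k.+1 =c[n] ew n k ++ [:: LX].
Proof.
move=> Hn Hk.
have [->|H0] := eqVneq k 0.
  rewrite ew0 ewM; try lia. apply: cg_sym. apply: cg_rel. exact: V7bm.
have [E|H1] := eqVneq k.+1 n.-1.
  rewrite E ewN; last lia. rewrite ewM; try lia.
  rewrite (_ : k.+1 = n.-1); last lia. apply: cg_rel. exact: V7am.
rewrite !ewM; try lia. apply: cg_rel. apply: V6m; lia.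
Qed.

Lemma ewN_x n : 1 < n -> ew n n.-1 ++ [:: LX] =c[n] [:: LX].
Proof. move=> Hn; rewrite ewN //. exact: xyx. Qed.
Lemma x_ew0 n : [:: LX] ++ ew n 0 =c[n] [:: LX].
Proof. exact: xyx. Qed.
Lemma ew0_y n : ew n 0 ++ [:: LY] =c[n] [:: LY].
Proof. exact: yxy. Qed.
Lemma y_ewN n : 1 < n -> [:: LY] ++ ew n n.-1 =c[n] [:: LY].
Proof. move=> Hn; rewrite ewN //. exact: yxy. Qed.

Lemma y_ew n k : 2 < n -> k.+1 < n -> [:: LY] ++ ew n k =c[n] ew n k.+1 ++ [:: LY].
Proof.
move=> Hn Hk. symmetry.
rewrite -[in X in X =c[n] _](yxy n).
rewrite (_ : [:: LY; LX; LY] = ew n 0 ++ [:: LY]) // catA ew_comm; try lia.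
rewrite ew0 -!catA (_ : [:: LY; LX] ++ ew n k.+1 ++ [:: LY] = [:: LY] ++ ([:: LX] ++ ew n k.+1) ++ [:: LY]) //.
rewrite x_ew //. rewrite -!catA (_ : [:: LX] ++ [:: LY] = ew n n.-1); last by rewrite ewN //; lia.
rewrite ew_comm; try lia. rewrite catA y_ewN; last lia. reflexivity.
Qed.

#[global] Hint Resolve congr_refl : core.

Definition xs m := nseq m LX.
Definition ys m := nseq m LY.
Lemma xsS m : xs m.+1 = [:: LX] ++ xs m. Proof. by []. Qed.
Lemma ysS m : ys m.+1 = [:: LY] ++ ys m. Proof. by []. Qed.
Lemma nseqSr (T : Type) m (a : T) : nseq m.+1 a = nseq m a ++ [:: a].
Proof. by elim: m => //= m ->. Qed.
Lemma xsSr m : xs m.+1 = xs m ++ [:: LX]. Proof. exact: nseqSr. Qed.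
Lemma ysSr m : ys m.+1 = ys m ++ [:: LY]. Proof. exact: nseqSr. Qed.

Lemma xs_ew n m j : 2 < n -> m <= j -> j < n -> xs m ++ ew n j =c[n] ew n (j - m) ++ xs m.
Proof.
move=> Hn; elim: m => [|m IH] Hm Hj; first by rewrite subn0 cats0.
rewrite xsS -catA IH; try lia. rewrite catA (_ : j - m = (j - m.+1).+1); last lia.
rewrite x_ew; try lia. by rewrite -catA.
Qed.

Lemma xs_ew_abs n m j : 2 < n -> j < m -> j < n -> xs m ++ ew n j =c[n] xs m.
Proof.
move=> Hn; elim: m => [|m IH] Hm Hj; first lia.
rewrite xsS -catA. have [Hjm|Hjm] := ltnP j m.
  by rewrite IH.
have -> : j = m by lia.
rewrite xs_ew; try lia. rewrite subnn catA x_ew0. reflexivity.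
Qed.

Lemma ys_ew n m j : 2 < n -> j + m < n -> ys m ++ ew n j =c[n] ew n (j + m) ++ ys m.
Proof.
move=> Hn; elim: m => [|m IH] Hj; first by rewrite addn0 cats0.
rewrite ysS -catA IH; try lia. rewrite catA y_ew; try lia.
by rewrite -catA addnS.
Qed.

Lemma ys_ew_abs n m j : 2 < n -> j < n -> n <= j + m -> ys m ++ ew n j =c[n] ys m.
Proof.
move=> Hn Hj; elim: m => [|m IH] Hm; first lia.
rewrite ysS -catA. have [Hjm|Hjm] := leqP n (j + m).
  by rewrite IH.
rewrite ys_ew; try lia. rewrite (_ : j + m = n.-1); last lia.
rewrite catA y_ewN; last lia. reflexivity.
Qed.

Lemma ew_xs_abs n m j : 2 < n -> j < n -> n <= j + m -> ew n j ++ xs m =c[n] xs m.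
Proof.
move=> Hn Hj; elim: m => [|m IH] Hm; first lia.
rewrite xsSr catA. have [Hjm|Hjm] := leqP n (j + m).
  by rewrite IH.
have E : j = n.-1 - m by lia.
rewrite E -xs_ew; try lia. rewrite -catA ewN_x; last lia. reflexivity.
Qed.

Lemma ew_ys_abs n m j : 2 < n -> j < m -> j < n -> ew n j ++ ys m =c[n] ys m.
Proof.
move=> Hn; elim: m => [|m IH] Hm Hj; first lia.
rewrite ysSr catA. have [Hjm|Hjm] := ltnP j m.
  by rewrite IH.
have -> : j = m by lia.
have := ys_ew Hn (m := m) (j := 0). rewrite add0n => <-; last lia.
rewrite -catA ew0_y. reflexivity.
Qed.

Definition EPr n a c (P : pred nat) := flatten [seq ew n k | k <- iota a c & P k].

Lemma EPr0 n a P : EPr n a 0 P = [::]. Proof. by []. Qed.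
Lemma EPr_cons n a c P :
  EPr n a c.+1 P = (if P a then ew n a else [::]) ++ EPr n a.+1 c P.
Proof. by rewrite /EPr /=; case: (P a). Qed.
Lemma EPr_consT n a c : EPr n a c.+1 predT = ew n a ++ EPr n a.+1 c predT.
Proof. by rewrite EPr_cons. Qed.
Lemma EPr_split n a c1 c2 P : EPr n a (c1 + c2) P = EPr n a c1 P ++ EPr n (a + c1) c2 P.
Proof. by rewrite /EPr iotaD filter_cat map_cat flatten_cat. Qed.
Lemma EPr_eq n a c P Q : {in iota a c, P =1 Q} -> EPr n a c P = EPr n a c Q.
Proof. by move=> H; rewrite /EPr (eq_in_filter H). Qed.

Lemma EPr_comm n a c P j : 2 < n -> a + c <= n -> j < n ->
  EPr n a c P ++ ew n j =c[n] ew n j ++ EPr n a c P.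
Proof.
move=> Hn; elim: c a => [|c IH] a Hac Hj; first by rewrite EPr0 cats0.
rewrite EPr_cons -catA IH; try lia. case: (P a) => //.
rewrite !catA ew_comm //; lia.
Qed.

Lemma EPr_add n a c P j : 2 < n -> a + c <= n -> a <= j < a + c ->
  EPr n a c P ++ ew n j =c[n] EPr n a c [pred k | P k || (k == j)].
Proof.
move=> Hn; elim: c a => [|c IH] a Hac Hj; first lia.
rewrite !EPr_cons /=. have [E|Ne] := eqVneq a j.
  subst j. rewrite orbT -catA EPr_comm; try lia.
  rewrite (@EPr_eq n a.+1 c [pred k | P k || (k == a)] P); last first.
    move=> k; rewrite mem_iota => Hk /=. case: eqP => [?|_]; [lia|by rewrite orbF].
  case: (P a); rewrite ?catA ?ew_idem //; lia.
rewrite orbF -catA IH //; lia.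
Qed.

Lemma EPr_T n a c : 0 < a -> a + c < n ->
  EPr n a c predT = [seq LE i | i <- iota a.+1 c].
Proof.
elim: c a => [|c IH] a Ha Hac //.
rewrite EPr_consT ewM; try lia. rewrite IH //; lia.
Qed.

Lemma x_EPr n a c : 2 < n -> a + c < n ->
  [:: LX] ++ EPr n a.+1 c predT =c[n] EPr n a c predT ++ [:: LX].
Proof.
move=> Hn; elim: c a => [|c IH] a Hac; first by rewrite !EPr0.
rewrite !EPr_consT catA x_ew; try lia. rewrite -!catA IH //; lia.
Qed.

Definition Z n := EPr n 0 n predT.

Lemma Z_decomp n : 2 < n -> Z n = EPr n 0 n.-1 predT ++ ew n n.-1.
Proof.
move=> Hn. rewrite /Z.
have -> : EPr n 0 n predT = EPr n 0 (n.-1 + 1) predT by rewrite addn1 prednK //; lia.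
rewrite EPr_split add0n.
by rewrite EPr_consT EPr0 cats0.
Qed.

Lemma Z_x' n : 2 < n -> Z n =c[n] EPr n 0 n.-1 predT ++ [:: LX].
Proof.
move=> Hn. rewrite -(@x_EPr n 0 n.-1); try lia.
have E1 : EPr n 1 n.-1 predT = es n ++ [:: LX; LY].
  rewrite (_ : n.-1 = (n - 2) + 1); last lia. rewrite EPr_split EPr_T; try lia.
  rewrite (_ : 1 + (n - 2) = n.-1); last lia. rewrite EPr_consT EPr0 cats0 ewN //; lia.
rewrite E1 -(cg_rel (V8m n)).
rewrite Z_decomp // ewN; last lia.
rewrite (_ : n.-1 = 1 + (n - 2)); last lia. rewrite EPr_split EPr_consT EPr0.
rewrite EPr_T; try lia. by rewrite cats0 -!catA.
Qed.

Lemma Z_x n : 2 < n -> Z n ++ [:: LX] =c[n] Z n.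
Proof.
move=> Hn. rewrite {1}Z_decomp // ewN; last lia.
rewrite -catA (_ : [:: LX; LY] ++ [:: LX] = [:: LX; LY; LX]) // xyx.
by rewrite Z_x'.
Qed.

Lemma Z_y n : 2 < n -> Z n ++ [:: LY] =c[n] Z n.
Proof.
move=> Hn. rewrite {1}Z_x' // -catA.
by rewrite Z_decomp // ewN; last lia.
Qed.

Lemma Z_xs n m : 2 < n -> Z n ++ xs m =c[n] Z n.
Proof. move=> Hn; elim: m => [|m IH]; first by rewrite cats0. by rewrite xsS catA Z_x. Qed.
Lemma Z_ys n m : 2 < n -> Z n ++ ys m =c[n] Z n.
Proof. move=> Hn; elim: m => [|m IH]; first by rewrite cats0. by rewrite ysS catA Z_y. Qed.

Definition vld n (b : bool) m k := if b then k + m < n else m <= k.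
Definition tgt (b : bool) m k := if b then k + m else k - m.
Definition shf n b m (A : pred nat) k := if A k && vld n b m k then Some (tgt b m k) else None.
Definition Xw (b : bool) m := if b then xs m else ys m.
Definition Pc n b m (A : pred nat) := [pred k | ~~ (A k && vld n b m k)].
Definition EP n P := EPr n 0 n P.
Definition W n b m A := EP n (Pc n b m A) ++ Xw b m.

Lemma run_ew n j k : 2 < n -> j < n -> k < n ->
  run n (ew n j) (Some k) = if k == j then None else Some k.
Proof.
move=> Hn Hj Hk. rewrite /ew.
case: eqP => [->|H0]; first by crush.
case: eqP => [->|H1]; first by crush.
rewrite /run /=. case: eqP; case: eqP => //; lia.
Qed.

Lemma run_EPr n a c P k : 2 < n -> a + c <= n -> k < n ->
  run n (EPr n a c P) (Some k) = if (a <= k < a + c) && P k then None else Some k.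
Proof.
move=> Hn; elim: c a => [|c IH] a Hac Hk.
  rewrite EPr0 /=. case: ifP => //; lia.
rewrite EPr_cons run_cat. case HP: (P a).
  rewrite run_ew; try lia. case: eqP => [->|Hne]; first by rewrite run_None HP; case: ifP => //; lia.
  rewrite IH; try lia. case: ifP => H1; case: ifP => H2 //; lia.
rewrite IH /=; try lia. case: ifP => H1; case: ifP => H2 //; try lia.
  move: H1 H2. have [->|Hne] := eqVneq k a. by rewrite HP; lia. lia.
Qed.

Lemma run_xs n m k : k < n -> run n (xs m) (Some k) = if k + m < n then Some (k + m) else None.
Proof.
move=> Hk; elim: m => [|m IH]; first by rewrite addn0 /= Hk.
rewrite xsSr run_cat IH addnS. case: ifP => H1 /=; case: ifP => H2 //; lia.
Qed.

Lemma run_ys n m k : k < n -> run n (ys m) (Some k) = if m <= k then Some (k - m) else None.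
Proof.
move=> Hk; elim: m => [|m IH]; first by rewrite subn0.
rewrite ysSr run_cat IH. case: ifP => H1 /=; [case: ifP => H2; case: ifP => H3 => //; try lia; congr Some; lia|].
case: ifP => //; lia.
Qed.

Lemma run_W n b m A k : 2 < n -> k < n -> run n (W n b m A) (Some k) = shf n b m A k.
Proof.
move=> Hn Hk. rewrite /W /EP run_cat run_EPr //= /shf /Pc /Xw /vld /tgt.
case: b; case: (A k) => /=; case: ifP => //= H; rewrite ?run_None ?run_xs ?run_ys //;
  case: ifP => //; lia.
Qed.

Ltac semt := repeat (case: ifP => /= ?); first [reflexivity | (congr Some; lia) | (exfalso; lia)].

Lemma EP_add n P j : 2 < n -> j < n -> EP n P ++ ew n j =c[n] EP n [pred k | P k || (k == j)].
Proof. move=> Hn Hj; apply: EPr_add => //; lia. Qed.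

Lemma EP_eq n P Q : (forall k, k < n -> P k = Q k) -> EP n P = EP n Q.
Proof. move=> H; apply: EPr_eq => k; rewrite mem_iota => Hk; apply: H; lia. Qed.

Definition stepP n l b m A b' m' A' :=
  (forall k, k < n -> step n l (shf n b m A k) = shf n b' m' A' k) /\
  W n b m A ++ [:: l] =c[n] W n b' m' A'.

Lemma step_E n b m A j : 2 < n -> 0 < j -> j < n.-1 ->
  stepP n (LE j.+1) b m A b m [pred k | A k && (tgt b m k != j)].
Proof.
move=> Hn Hj0 Hj; split.
  move=> k Hk; rewrite /shf /=; case: (A k) => //=; case: (vld n b m k) => //=; rewrite ?andbF //.
  by rewrite eqSS; case: eqP.
rewrite /W -catA (_ : [:: LE j.+1] = ew n j); last by rewrite ewM.
case: b => /=.
- have [Hmj|Hmj] := leqP m j.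
    rewrite xs_ew; try lia. rewrite catA EP_add; try lia.
    rewrite (@EP_eq n _ (Pc n true m [pred k | A k && (tgt true m k != j)])) //.
    move=> k Hk; rewrite /Pc /vld /tgt /=; case: (A k) => /=; lia.
  rewrite xs_ew_abs; try lia.
  rewrite (@EP_eq n _ (Pc n true m [pred k | A k && (tgt true m k != j)])) //.
  move=> k Hk; rewrite /Pc /vld /tgt /=; case: (A k) => /=; lia.
- have [Hmj|Hmj] := ltnP (j + m) n.
    rewrite ys_ew; try lia. rewrite catA EP_add; try lia.
    rewrite (@EP_eq n _ (Pc n false m [pred k | A k && (tgt false m k != j)])) //.
    move=> k Hk; rewrite /Pc /vld /tgt /=; case: (A k) => /=; lia.
  rewrite ys_ew_abs; try lia.
  rewrite (@EP_eq n _ (Pc n false m [pred k | A k && (tgt false m k != j)])) //.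
  move=> k Hk; rewrite /Pc /vld /tgt /=; case: (A k) => /=; lia.
Qed.

Lemma stepP_false0 n l A b' m' A' : stepP n l true 0 A b' m' A' -> stepP n l false 0 A b' m' A'.
Proof.
case=> H1 H2; split.
  move=> k Hk; rewrite -H1 // /shf /vld /tgt /=. by rewrite addn0 subn0 Hk.
apply: cg_trans H2. rewrite /W /Xw. rewrite (@EP_eq n (Pc n false 0 A) (Pc n true 0 A)) //.
move=> k Hk; rewrite /Pc /vld /= addn0 Hk; by case: (A k).
Qed.

Lemma step_X_true n m A : 2 < n -> stepP n LX true m A true m.+1 A.
Proof.
move=> Hn; split.
  move=> k Hk; rewrite /shf /vld /tgt /=; case: (A k) => //=.
  rewrite addnS; semt.
rewrite /W /Xw -catA -xsSr.
have [Hm|Hm] := ltnP m n.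
  apply: (cg_trans (v := EP n (Pc n true m A) ++ ew n (n.-1 - m) ++ xs m.+1)).
    apply: cg_l; apply: cg_sym; apply: ew_xs_abs; lia.
  rewrite catA EP_add; try lia.
  rewrite (@EP_eq n _ (Pc n true m.+1 A)) //.
  move=> k Hk; rewrite /Pc /vld /=; case: (A k) => /=; lia.
rewrite (@EP_eq n _ (Pc n true m.+1 A)) //.
move=> k Hk; rewrite /Pc /vld /=; case: (A k) => /=; lia.
Qed.

Lemma step_X_false n m A : 2 < n ->
  stepP n LX false m.+1 A false m [pred k | A k && (m < k)].
Proof.
move=> Hn; split.
  move=> k Hk; rewrite /shf /vld /tgt /=; case: (A k) => //=.
  semt.
rewrite /W /Xw -catA ysSr -catA (_ : [:: LY] ++ [:: LX] = ew n 0) //.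
have [Hm|Hm] := ltnP m n.
  have := @ys_ew n m 0 Hn. rewrite add0n => ->; last lia.
  rewrite catA EP_add; try lia.
  rewrite (@EP_eq n _ (Pc n false m [pred k | A k && (m < k)])) //.
  move=> k Hk; rewrite /Pc /vld /=; case: (A k) => /=; lia.
rewrite ys_ew_abs; try lia.
rewrite (@EP_eq n _ (Pc n false m [pred k | A k && (m < k)])) //.
move=> k Hk; rewrite /Pc /vld /=; case: (A k) => /=; lia.
Qed.

Lemma step_Y_false n m A : 2 < n -> stepP n LY false m A false m.+1 A.
Proof.
move=> Hn; split.
  move=> k Hk; rewrite /shf /vld /tgt /=; case: (A k) => //=.
  semt.
rewrite /W /Xw -catA -ysSr.
have [Hm|Hm] := ltnP m n.
  apply: (cg_trans (v := EP n (Pc n false m A) ++ ew n m ++ ys m.+1)).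
    apply: cg_l; apply: cg_sym; apply: ew_ys_abs; lia.
  rewrite catA EP_add; try lia.
  rewrite (@EP_eq n _ (Pc n false m.+1 A)) //.
  move=> k Hk; rewrite /Pc /vld /=; case: (A k) => /=; lia.
rewrite (@EP_eq n _ (Pc n false m.+1 A)) //.
move=> k Hk; rewrite /Pc /vld /=; case: (A k) => /=; lia.
Qed.

Lemma step_Y_true n m A : 2 < n ->
  stepP n LY true m.+1 A true m [pred k | A k && (k + m.+1 < n)].
Proof.
move=> Hn; split.
  move=> k Hk; rewrite /shf /vld /tgt /=; case: (A k) => //=.
  semt.
rewrite /W /Xw -catA xsSr -catA (_ : [:: LX] ++ [:: LY] = ew n n.-1); last by rewrite ewN //; lia.
have [Hm|Hm] := ltnP m n.
  rewrite xs_ew; try lia. rewrite catA EP_add; try lia.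
  rewrite (@EP_eq n _ (Pc n true m [pred k | A k && (k + m.+1 < n)])) //.
  move=> k Hk; rewrite /Pc /vld /=; case: (A k) => /=; lia.
rewrite xs_ew_abs; try lia.
rewrite (@EP_eq n _ (Pc n true m [pred k | A k && (k + m.+1 < n)])) //.
move=> k Hk; rewrite /Pc /vld /=; case: (A k) => /=; lia.
Qed.

Lemma stepP_true0 n l A b' m' A' : stepP n l false 0 A b' m' A' -> stepP n l true 0 A b' m' A'.
Proof.
case=> H1 H2; split.
  move=> k Hk; rewrite -H1 // /shf /vld /tgt /=. by rewrite addn0 subn0 Hk.
apply: cg_trans H2. rewrite /W /Xw. rewrite (@EP_eq n (Pc n true 0 A) (Pc n false 0 A)) //.
move=> k Hk; rewrite /Pc /vld /= addn0 Hk; by case: (A k).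
Qed.

Lemma step_any n b m A l : 2 < n -> l \in D n ->
  exists b' m' A', stepP n l b m A b' m' A'.
Proof.
move=> Hn; rewrite /D mem_cat !inE => /orP[/orP[]/eqP->|].
- case: b.
    by do 3 eexists; apply: step_X_true.
  case: m => [|m].
    by do 3 eexists; apply: stepP_false0; apply: step_X_true.
  by do 3 eexists; apply: step_X_false.
- case: b; last by do 3 eexists; apply: step_Y_false.
  case: m => [|m].
    by do 3 eexists; apply: stepP_true0; apply: step_Y_false.
  by do 3 eexists; apply: step_Y_true.
- case/mapP=> i; rewrite mem_iota => Hi ->.
  have -> : i = i.-1.+1 by lia.
  do 3 eexists; apply: step_E => //; lia.
Qed.

Lemma main_ind n w : 2 < n -> all (mem (D n)) w ->
  exists b m A, (forall k, k < n -> run n w (Some k) = shf n b m A k) /\ w =c[n] W n b m A.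
Proof.
move=> Hn; elim/last_ind: w => [|w l IH].
  move=> _; exists true, 0, predT; split.
    by move=> k Hk; rewrite /shf /vld /tgt /= addn0 Hk.
  rewrite /W /Xw cats0 (@EP_eq n _ pred0); last by move=> k Hk; rewrite /Pc /vld /= addn0 Hk.
  by rewrite /EP /EPr filter_pred0.
rewrite all_rcons => /andP[Hl Hw].
have [b [m [A [H1 H2]]]] := IH Hw.
have [b' [m' [A' [H3 H4]]]] := step_any b m A Hn Hl.
exists b', m', A'; split.
  by move=> k Hk; rewrite -cats1 run_cat H1 // -H3.
rewrite -cats1. apply: cg_trans H4. exact: cg_r.
Qed.

Lemma W_unique n b m A b' m' A' : 2 < n ->
  (forall k, k < n -> shf n b m A k = shf n b' m' A' k) -> W n b m A =c[n] W n b' m' A'.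
Proof.
move=> Hn H.
have HP : forall b m A, (forall k, k < n -> Pc n b m A k = (shf n b m A k == None)).
  by move=> b1 m1 A1 k _; rewrite /Pc /shf /=; case: ifP.
rewrite /W (@EP_eq n (Pc n b m A) (Pc n b' m' A')); last first.
  by move=> k Hk; rewrite !HP // H.
case: (boolP (has (fun k => A k && vld n b m k) (iota 0 n))).
  case/hasP=> k0; rewrite mem_iota => Hk0 Hv.
  have := H k0 ltac:(lia). rewrite /shf Hv. case: ifP => // Hv' [].
  clear H; move: Hv Hv'; rewrite /vld /tgt /Xw; case: b; case: b' => /andP[_ Hv1] /andP[_ Hv2] E.
  - by have -> : m = m' by lia.
  - by have [-> ->] : m = 0 /\ m' = 0 by lia.
  - by have [-> ->] : m = 0 /\ m' = 0 by lia.
  - by have -> : m = m' by lia.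
move=> /hasPn Hno.
have E : forall b1 m1 A1, (forall k, k < n -> shf n b1 m1 A1 k = None) ->
    EP n (Pc n b1 m1 A1) = Z n.
  move=> b1 m1 A1 Hs; rewrite /Z /EP; apply: EPr_eq => k; rewrite mem_iota => Hk.
  by rewrite HP ?Hs //; lia.
have Hs : forall k, k < n -> shf n b m A k = None.
  move=> k Hk; rewrite /shf; have := Hno k; rewrite mem_iota => /(_ ltac:(lia)) /negbTE -> //.
have Hs' : forall k, k < n -> shf n b' m' A' k = None by move=> k Hk; rewrite -H // Hs.
rewrite (E b' m' A') //.
have ZX : forall b1 m1, Z n ++ Xw b1 m1 =c[n] Z n.
  by move=> [] m1; rewrite /Xw ?Z_xs ?Z_ys.
by rewrite !ZX.
Qed.

Lemma complete n u v : 2 < n -> all (mem (D n)) u -> all (mem (D n)) v ->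
  eval_word n u = eval_word n v -> u =c[n] v.
Proof.
move=> Hn Hu Hv /eval_eq He.
have [b [m [A [H1 H2]]]] := main_ind Hn Hu.
have [b' [m' [A' [H3 H4]]]] := main_ind Hn Hv.
apply: cg_trans H2 _. apply: cg_trans _ (cg_sym H4).
apply: W_unique => // k Hk. by rewrite -H1 // -H3 // He.
Qed.

Lemma ew_inD n k : 2 < n -> k < n -> all (mem (D n)) (ew n k).
Proof.
move=> Hn Hk; rewrite /ew; case: eqP => // H0; case: eqP => // H1.
rewrite /= andbT /D mem_cat; apply/orP; right; apply/mapP; exists k.+1 => //.
rewrite mem_iota; lia.
Qed.

Lemma EPr_inD n a c P : 2 < n -> a + c <= n -> all (mem (D n)) (EPr n a c P).
Proof.
move=> Hn; elim: c a => [|c IH] a Hac //.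
rewrite EPr_cons all_cat IH ?andbT; last lia.
case: (P a) => //; apply: ew_inD => //; lia.
Qed.

Lemma W_inD n b m A : 2 < n -> all (mem (D n)) (W n b m A).
Proof.
move=> Hn; rewrite /W all_cat EPr_inD // /Xw; case: b; rewrite /xs /ys all_nseq; by case: m.
Qed.

Lemma OCI_of_shf n b m A (a : ptrans n) : 2 < n ->
  (forall k : 'I_n, omap val (a k) = shf n b m A k) -> in_OCI a.
Proof.
move=> Hn H.
have Hdom : forall i : 'I_n, in_dom a i ->
    (A i && vld n b m i) /\ omap val (a i) = Some (tgt b m i).
  move=> i; rewrite /in_dom; have := H i; rewrite /shf; case: ifP => // Hv.
  by case: (a i).
split.
  exists (if b then (if m < n then m else 0) else (n - m) %% n).
    destruct b; first by case: ifP => //; lia.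
    by rewrite ltn_pmod //; lia.
  move=> i Hi; have [/andP[_ Hv] ->] := Hdom i Hi; congr Some.
  move: Hv; rewrite /gpow /tgt /vld; have := ltn_ord i; destruct b => Hin Hv.
    by rewrite (_ : m < n) ?modn_small //; lia.
  have [->|Hm0] := eqVneq m 0.
    by rewrite !subn0 modnn addn0 modn_small.
  rewrite [(n - m) %% n]modn_small; last lia.
  rewrite (_ : i + (n - m) = (i - m) + n); last lia.
  by rewrite modnDr modn_small //; lia.
move=> i j ai aj Hij Ei Ej.
have := H i; rewrite Ei /shf; case: ifP => // /andP[_ Hvi] [Hai].
have := H j; rewrite Ej /shf; case: ifP => // /andP[_ Hvj] [Haj].
move: Hvi Hvj Hai Haj Hij; rewrite /vld /tgt /=; destruct b => *; lia.
Qed.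

Lemma modn_big k n : n <= k -> k < n + n -> k %% n = k - n.
Proof.
move=> H1 H2; rewrite -{1}(subnK H1) modnDr modn_small //; lia.
Qed.

Lemma shf_of_OCI n (a : ptrans n) : 2 < n -> in_OCI a ->
  exists b m A, forall k : 'I_n, omap val (a k) = shf n b m A k.
Proof.
move=> Hn [[kk Hkk Hg] Hop].
pose A : pred nat := fun i => if insub i is Some o then in_dom a (o : 'I_n) else false.
have HA : forall k : 'I_n, A k = in_dom a k by move=> k; rewrite /A valK.
have Hnd : forall k : 'I_n, ~~ in_dom a k -> a k = None.
  by move=> k; rewrite /in_dom negbK => /eqP.
case: (boolP [exists i : 'I_n, in_dom a i && (val i + kk < n)]).
  case/existsP=> i0 /andP[Hi0 Hi0k].
  have Hall : forall k : 'I_n, in_dom a k -> val k + kk < n.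
    move=> k Hk; rewrite ltnNge; apply/negP => Hk2; simpl in *.
    have Hik : val i0 < val k by simpl; lia.
    move: (Hg _ Hi0) (Hg _ Hk); rewrite /gpow.
    case Ea: (a i0) => [ai|] //=; case Eb: (a k) => [ak|] //= [Eai] [Eak].
    have Hkn := ltn_ord k.
    have := Hop _ _ _ _ Hik Ea Eb. simpl in *. rewrite Eai Eak modn_small // modn_big; lia.
  exists true; exists kk; exists A; move=> k; rewrite /shf /vld /tgt HA.
  case: (boolP (in_dom a k)) => Hk /=; last by rewrite Hnd.
  rewrite Hall // Hg // /gpow modn_small //. exact: Hall.
move=> /existsPn Hno.
exists false; exists (n - kk); exists A; move=> k; rewrite /shf /vld /tgt HA.
case: (boolP (in_dom a k)) => Hk /=; last by rewrite Hnd.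
have := Hno k; rewrite Hk /= -leqNgt => Hk2.
have Hkn := ltn_ord k.
rewrite Hg // /gpow modn_big; simpl; try lia.
rewrite (_ : n - kk <= k); last lia. congr Some; lia.
Qed.

Lemma sum_tri c a : sumn [seq (a + c) - i.+1 | i <- iota a c] * 2 = c * c.-1.
Proof.
elim: c a => [|c IH] a //=.
rewrite (_ : [seq a + c.+1 - i.+1 | i <- iota a.+1 c] = [seq a.+1 + c - i.+1 | i <- iota a.+1 c]);
  last by rewrite addSnnS.
rewrite mulnDl IH. case: c {IH} => [|c] /=; first by rewrite addn1 subnn.
rewrite (_ : a + c.+2 - a.+1 = c.+1); last lia. nia.
Qed.

Lemma size_flat2 (T : Type) (f g : nat -> T) s :
  size (flatten [seq [:: f i; g i] | i <- s]) = (size s).*2.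
Proof. by elim: s => //= i s ->; rewrite doubleS. Qed.

Lemma size_V n : 2 < n -> size (V n) = (n ^ 2 + 3 * n)./2.
Proof.
move=> Hn. rewrite /V !size_cat !size_map size_iota size_allpairs_dep size_flat2 size_iota /=.
set S := sumn _.
have HS : S * 2 = (n - 2) * (n - 3).
  rewrite /S (eq_map (g := fun i => (2 + (n - 2)) - i.+1)); last by move=> i; rewrite size_iota; lia.
  rewrite sum_tri; congr (_ * _); lia.
rewrite size_iota.
have E : n ^ 2 + 3 * n = (n - 2 + (2 + (1 + (S + ((n - 2).*2 + ((n - 3) + (2 + 1))))))).*2.
  rewrite -muln2. nia.
by rewrite E doubleK.
Qed.

Lemma D_size_uniq n : 2 < n -> size (D n) = n /\ uniq (D n).
Proof.
move=> Hn; split; first by rewrite /D size_cat size_map size_iota /=; lia.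
rewrite /D cat_uniq /=; apply/andP; split.
  by apply/hasPn => l /mapP[i _ ->].
rewrite map_inj_uniq ?iota_uniq //. by move=> i j [].
Qed.

Lemma D_cases n l : l \in D n -> [\/ l = LX, l = LY | exists2 i, l = LE i & 2 <= i < n].
Proof.
rewrite /D mem_cat !inE => /orP[/orP[]/eqP->|]; [by constructor|by constructor|].
case/mapP=> i; rewrite mem_iota => Hi ->; apply: Or33; exists i => //; lia.
Qed.

Ltac fin p := have Hp : p < n := ltac:(lia); have := HE p Hp; rewrite /=; repeat (case: ifP => /= ?); move=> Heq;
  first [ discriminate | (exfalso; lia) | (congr LE; lia) ].

Theorem theorem2p17 (n : nat) : 3 <= n ->
  (* the map D -> OCI_n is injective *)
  {in D n &, injective (@eval_letter n)} /\
  (* its image generates OCI_n (and lies in OCI_n) *)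
  (forall a : ptrans n, in_OCI a <-> exists2 w, all (mem (D n)) w & a = eval_word n w) /\
  (* the kernel of D^* -> OCI_n is the congruence generated by V *)
  (forall u v, all (mem (D n)) u -> all (mem (D n)) v ->
     (eval_word n u = eval_word n v <-> congr (V n) u v)) /\
  (* n generators and (n^2+3n)/2 relations *)
  size (D n) = n /\ uniq (D n) /\ size (V n) = (n ^ 2 + 3 * n)./2.
Proof.
move=> Hn.
have [HsD HuD] := D_size_uniq Hn.
split.
  move=> l1 l2 H1 H2 E.
  have HE : forall i, i < n -> step n l1 (Some i) = step n l2 (Some i).
    move=> i Hi. by rewrite -!(letterE _ (Ordinal Hi)) E.
  case/D_cases: H1 => [E1|E1|[i E1 Hi]]; case/D_cases: H2 => [E2|E2|[j E2 Hj]]; subst l1 l2 => //.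
  all: try first [ fin 0 | fin n.-1 | fin i.-1 ].
split.
  move=> a; split.
    move=> /(shf_of_OCI Hn) [b [m [A HA]]].
    exists (W n b m A); first exact: W_inD.
    apply/ffunP => k; apply: omap_val_inj; rewrite evalE run_W //; try exact: ltn_ord.
  case=> w Hw ->.
  have [b [m [A [H1 _]]]] := main_ind Hn Hw.
  apply: (@OCI_of_shf n b m A) => // k. rewrite evalE; apply: H1; exact: ltn_ord.
split.
  move=> u v Hu Hv; split; first exact: complete.
  by move=> /(congr_sound Hn) /eval_eq.
by split; [|split; [|exact: size_V]].
Qed.
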